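(* Let $G$ be a finite nilpotent group. Then $G$ contains no word image impostor if and only if $G$ is an abelian group of prime exponent.
   Context: $F_d$ is the free group on $d$ letters; for $w\in F_d$, $w(G)$ is the image of the word map $G^d\to G$ given by evaluating $w$. A subset $A\subseteq G$ is a word image candidate if $1\in A$ and $\varphi(A)\subseteq A$ for every automorphism $\varphi$ of $G$. A word image impostor is a word image candidate $A$ such that $A\neq w(G)$ for every $d\ge1$ and every $w\in F_d$. *)

(* Defs.v *)
From HB Require Import structures.
From mathcomp Require Import all_boot all_order all_fingroup all_solvable.
Set Implicit Arguments. Unset Strict Implicit. Unset Printing Implicit Defensive.
Local Open Scope group_scope.

(* Elements of the free group F_d, presented as (not necessarily reduced)
   group terms over the d letters 'I_d.  Every element of F_d is represented,
   and the word map of a term only depends on the element of F_d it denotes. *)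
Inductive fword (d : nat) : Type :=
| FVar of 'I_d
| FOne
| FMul of fword d & fword d
| FInv of fword d.

Fixpoint weval (gT : finGroupType) (d : nat) (g : 'I_d -> gT) (w : fword d) : gT :=
  match w with
  | FVar i => g i
  | FOne => 1
  | FMul u v => weval g u * weval g v
  | FInv u => (weval g u)^-1
  end.

Definition word_image (gT : finGroupType) (G : {set gT}) (d : nat) (w : fword d)
  : {set gT} :=
  [set x | [exists g : {ffun 'I_d -> gT},
              [forall i, g i \in G] && (weval g w == x)]].

Definition word_image_candidate (gT : finGroupType) (G : {set gT}) (A : {set gT}) :=
  [/\ A \subset G, 1 \in A & forall a : {perm gT}, a \in Aut G -> a @: A \subset A].

Definition word_image_impostor (gT : finGroupType) (G : {set gT}) (A : {set gT}) :=
  word_image_candidate G A /\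
  forall (d : nat), (1 <= d)%N -> forall w : fword d, A != word_image G w.

(* Main.v *)
Require Import Defs.
From HB Require Import structures.
From mathcomp Require Import all_boot all_order all_fingroup all_solvable.
From mathcomp Require Import all_algebra all_character.
Set Implicit Arguments. Unset Strict Implicit. Unset Printing Implicit Defensive.
Import GRing.Theory.

Section RV.
Local Open Scope ring_scope.

Lemma rV_trans (F : fieldType) n (u v : 'rV[F]_n) :
  u != 0 -> v != 0 -> exists2 A : 'M[F]_n, A \in unitmx & u *m A = v.
Proof.
move=> nzu nzv.
have ru : \rank u = 1%N by rewrite rank_rV nzu.
have rv : \rank v = 1%N by rewrite rank_rV nzv.
set cu := col_ebase u 0 0; set cv := col_ebase v 0 0.
have cu0 : cu != 0.
  by have := col_ebase_unit u; rewrite unitmxE det_mx11 unitfE.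
have eu : u = cu *: (pid_mx 1 *m row_ebase u).
  rewrite -{1}(mulmx_ebase u) ru [col_ebase u]mx11_scalar mul_scalar_mx.
  by rewrite scalemxAl.
have ev : v = cv *: (pid_mx 1 *m row_ebase v).
  rewrite -{1}(mulmx_ebase v) rv [col_ebase v]mx11_scalar mul_scalar_mx.
  by rewrite scalemxAl.
exists ((cv / cu) *: (invmx (row_ebase u) *m row_ebase v)).
  rewrite unitmxZ ?unitmx_mul ?unitmx_inv ?row_ebase_unit // unitfE mulf_neq0 ?invr_eq0 //.
  by have := col_ebase_unit v; rewrite unitmxE det_mx11 unitfE.
rewrite {1}eu -scalemxAl -scalemxAr scalerA !mulmxA mulmxK ?row_ebase_unit //.
by rewrite mulrC mulfVK.
Qed.
End RV.

Local Open Scope group_scope.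

Lemma abelem_trans (gT : finGroupType) p (G : {group gT}) (abelG : p.-abelem G) (ntG : G :!=: 1) x y :
  x \in G -> y \in G -> x != 1 -> y != 1 -> exists2 a : {perm gT}, a \in Aut G & a x = y.
Proof.
move=> Gx Gy nx ny.
pose ErV := abelem_rV abelG ntG; pose rVE := rVabelem abelG ntG.
have nz z : z \in G -> z != 1 -> (ErV z != 0)%R.
  move=> Gz; apply: contra => /eqP ez; apply/eqP.
  apply: (@abelem_rV_inj _ _ _ abelG ntG _ _ Gz (group1 G)); rewrite (abelem_rV_1 abelG ntG); exact: ez.
have [A uA eA] := rV_trans (nz x Gx nx) (nz y Gy ny).
pose f z := rVE (ErV z *m A)%R.
have injf : {in G &, injective f}.
  move=> a b Ga Gb /rVabelem_inj /(can_inj (mulmxK uA)).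
  exact: (@abelem_rV_inj _ _ _ abelG ntG _ _ Ga Gb).
have sfG : f @: G \subset G.
  by apply/subsetP=> _ /imsetP[z _ ->]; exact: mem_rVabelem.
exists (perm_in injf sfG).
  rewrite inE perm_in_on /=; apply/morphicP=> a b Ga Gb.
  rewrite !perm_inE ?groupM // /f /ErV abelem_rV_M // mulmxDl.
  exact: rVabelemD.
by rewrite perm_inE // /f eA /rVE abelem_rV_K.
Qed.

Section Aux.
Variable gT : finGroupType.
Implicit Types G : {group gT}.

Lemma weval_in G d (g : 'I_d -> gT) (w : fword d) :
  (forall i, g i \in G) -> weval g w \in G.
Proof.
move=> Gg; elim: w => [i||u IHu v IHv|u IHu] /=; by rewrite ?group1 ?groupM ?groupV.
Qed.

Lemma eq_weval d (g g' : 'I_d -> gT) (w : fword d) : g =1 g' -> weval g w = weval g' w.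
Proof. by move=> e; elim: w => [i||u IHu v IHv|u IHu] /=; rewrite ?e ?IHu ?IHv. Qed.

Lemma weval_morph G (phi : gT -> gT) (hm : {in G &, {morph phi : a b / a * b}})
  d (g : 'I_d -> gT) (w : fword d) :
  (forall i, g i \in G) -> phi (weval g w) = weval (fun i => phi (g i)) w.
Proof.
move=> Gg.
have phi1 : phi 1 = 1.
  have := hm 1 1 (group1 G) (group1 G); rewrite mulg1 => h.
  by apply: (mulgI (phi 1)); rewrite mulg1 -h.
elim: w => [i||u IHu v IHv|u IHu] //=.
  by rewrite hm ?weval_in // IHu IHv.
have Gu := weval_in u Gg.
apply/eqP; rewrite eq_sym eq_invg_mul -IHu -hm ?groupV // mulgV phi1.
exact: eqxx.
Qed.

Lemma word_image_closed G (phi : gT -> gT) (hm : {in G &, {morph phi : a b / a * b}})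
  (hG : {in G, forall a, phi a \in G}) d (w : fword d) x :
  x \in word_image G w -> phi x \in word_image G w.
Proof.
rewrite !inE => /existsP[g /andP[/forallP Gg /eqP <-]].
apply/existsP; exists [ffun i => phi (g i)]; apply/andP; split.
  by apply/forallP => i; rewrite ffunE hG.
rewrite (weval_morph hm) //; by apply/eqP; apply: eq_weval => i; rewrite ffunE.
Qed.

Lemma impostor_of_endo G A (phi : gT -> gT) x :
  word_image_candidate G A -> {in G &, {morph phi : a b / a * b}} ->
  {in G, forall a, phi a \in G} -> x \in A -> phi x \notin A ->
  word_image_impostor G A.
Proof.
move=> cA hm hG Ax nAphi; split => // d _ w; apply/negP => /eqP eA.
by move: nAphi; rewrite eA (word_image_closed hm hG) // -eA.
Qed.

Lemma word_image_one G : word_image G (FOne 1) = [set 1].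
Proof.
apply/setP => x; rewrite !inE; apply/existsP/eqP => [[g /andP[_ /eqP <-]] //|->].
by exists [ffun _ => 1]; rewrite eqxx andbT; apply/forallP => i; rewrite ffunE group1.
Qed.

Lemma word_image_var G : word_image G (FVar (@ord0 0)) = G.
Proof.
apply/setP => x; rewrite !inE; apply/existsP/idP => [[g /andP[/forallP Gg /eqP <-]]|Gx]; first exact: Gg.
by exists [ffun _ => x]; rewrite /= ffunE eqxx andbT; apply/forallP => i; rewrite ffunE.
Qed.

Lemma aut1 G (a : {perm gT}) : a \in Aut G -> a 1 = 1.
Proof. by move=> AutGa; rewrite -(autmE AutGa) morph1. Qed.

End Aux.

Section Main.
Variable gT : finGroupType.

Lemma aut_center (G : {group gT}) (a : {perm gT}) u :
  a \in Aut G -> u \in 'Z(G) -> a u \in 'Z(G).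
Proof.
move=> Aa Zu; have /charP[_ chZ] := center_char G.
rewrite -(autmE Aa) -(chZ _ (injm_autm Aa) (im_autm Aa)).
by apply: mem_morphim => //; apply: (subsetP (center_sub G)).
Qed.

Lemma nonab_impostor (G : {group gT}) : G :!=: 1 -> nilpotent G -> ~~ abelian G ->
  exists A, word_image_impostor G A.
Proof.
move=> ntG nilG nabG.
have [M maxM] := ex_maxnormal_ntrivg ntG.
have nsMG := maxnormal_normal maxM; have /andP[sMG nMG] := nsMG.
have prGM : prime #|G / M|.
  apply: simple_sol_prime; first exact: quotient_sol (nilpotent_sol nilG).
  by rewrite quotient_simple.
set p := #|G / M| in prGM.
have pG : p %| #|G| by rewrite /p card_quotient // dvdn_indexg.
have [y Gy oy] := Cauchy prGM pG.
have yOp : y \in 'O_p(G).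
  by rewrite (mem_normal_Hall (nilpotent_pcore_Hall p nilG) (pcore_normal p G)) // /p_elt oy pnat_id.
have ntOp : 'O_p(G) != 1.
  apply/trivgPn; exists y => //; rewrite -order_eq1 oy; apply: contraTneq prGM => ->; done.
have ntK := meet_center_nil nilG (pcore_normal p G) ntOp.
have pK : p.-group ('O_p(G) :&: 'Z(G)) := pgroupS (subsetIl _ _) (pcore_pgroup _ _).
have [_ pdK _] := pgroup_pdiv pK ntK.
have [z Kz oz] := Cauchy prGM pdK.
have Zz : z \in 'Z(G) by move: Kz; rewrite inE => /andP[].
have Gz : z \in G := subsetP (center_sub G) z Zz.
have z1 : z != 1.
  by rewrite -order_eq1 oz; apply: contraTneq prGM => ->.
have /subsetPn[a Ga nMa] : ~~ (G \subset M).
  by have := maxnormal_proper maxM; rewrite properE => /andP[].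
have /subsetPn[b Gb nZb] : ~~ (G \subset 'Z(G)).
  apply: contra nabG => sGZ; exact: subset_trans sGZ (subsetIr _ _).
have [x Gx [nMx nZx]] : exists2 x, x \in G & x \notin M /\ x \notin 'Z(G).
  case: (boolP (a \in 'Z(G))) => Za; last by exists a.
  case: (boolP (b \in M)) => Mb; last by exists b.
  exists (a * b); first by rewrite groupM.
  split.
    by apply: contra nMa => Mab; rewrite -(mulgK b a) groupM ?groupV.
  apply: contra nZb => Zab; rewrite -(mulKg a b) groupM ?groupV //.
set cx := coset M x.
have Gcx : cx \in G / M by apply: mem_quotient.
have ocx : #[cx] = p.
  apply/prime_nt_dvdP => //; last exact: order_dvdG.
  rewrite order_eq1; apply: contra nMx => /eqP cx1.
  by apply: coset_idr => //; apply: (subsetP nMG).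
have cyc : <[cx]> = G / M.
  apply/eqP; rewrite eqEcard cycle_subG Gcx -orderE ocx leqnn; done.
have dvd : #[z] %| #[cx] by rewrite oz ocx.
pose phi g := eltm dvd (coset M g).
have inc g : g \in G -> coset M g \in <[cx]>.
  by move=> Gg; rewrite cyc mem_quotient.
have hm : {in G &, {morph phi : u v / u * v}}.
  move=> u v Gu Gv; rewrite /phi morphM ?(subsetP nMG) //.
  by rewrite eltmM ?inc.
have hG : {in G, forall u, phi u \in G}.
  move=> u Gu; rewrite /phi; have /cycleP[k ->] := inc u Gu.
  by rewrite eltmE groupX.
exists ((G :\: 'Z(G)) :|: [set 1]).
apply: (impostor_of_endo (x := x) _ hm hG).
- split.
  + by rewrite subUset subsetDl sub1set group1.
  + by rewrite !inE eqxx orbT.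
  + move=> c Ac; apply/subsetP => _ /imsetP[t At ->].
    move: At; rewrite in_setU in_set1 in_setD => /orP[/andP[nZt Gt] | /eqP ->].
    * rewrite in_setU in_setD (Aut_closed Ac Gt) andbT; apply/orP; left.
      apply: contra nZt => Zct.
      rewrite -(permK c t); apply: (aut_center (a := c^-1)) => //; by rewrite groupV.
    * by rewrite (aut1 Ac) in_setU in_set1 eqxx orbT.
- by rewrite in_setU in_setD nZx Gx.
- by rewrite /phi eltm_id in_setU in_setD in_set1 Zz /= (negPf z1).
Qed.

Lemma ab_impostor (G : {group gT}) : G :!=: 1 -> nilpotent G -> abelian G ->
  ~~ prime (exponent G) -> exists A, word_image_impostor G A.
Proof.
move=> ntG nilG abG npr.
have [x Gx ex] := exponent_witness nilG.
set e := exponent G in npr ex.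
have e1 : 1 < e.
  rewrite ltn_neqAle exponent_gt0 andbT eq_sym.
  by apply: contra ntG => /eqP e1; rewrite trivg_exponent -/e e1.
set p := pdiv e.
have prp : prime p := pdiv_prime e1.
have pde : p %| e := pdiv_dvd e.
pose phi (g : gT) := g ^+ p.
have hm : {in G &, {morph phi : u v / u * v}}.
  by move=> u v Gu Gv; rewrite /phi expgMn //; apply: (centsP abG).
have hG : {in G, forall u, phi u \in G} by move=> u Gu; rewrite /phi groupX.
have oxp : #[x ^+ p] = e %/ p by rewrite orderXdiv -ex.
have ne1 : e %/ p != 1%N.
  apply: contra npr => /eqP h; by rewrite -(divnK pde) h mul1n.
have nee : e %/ p != e.
  by rewrite neq_ltn ltn_Pdiv ?prime_gt1 ?exponent_gt0.
exists ([set g in G | #[g] == e] :|: [set 1]).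
apply: (impostor_of_endo (x := x) _ hm hG).
- split.
  + apply/subsetP => g; rewrite !inE => /orP[/andP[] // | /eqP ->]; exact: group1.
  + by rewrite !inE eqxx orbT.
  + move=> c Ac; apply/subsetP => _ /imsetP[t At ->].
    move: At; rewrite !inE => /orP[/andP[Gt ot] | /eqP ->].
    * by rewrite Aut_closed //= -(autmE Ac) order_injm ?injm_autm // ot.
    * by rewrite (aut1 Ac) eqxx orbT.
- by rewrite !inE Gx ex eqxx.
- rewrite /phi !inE groupX //= oxp (negPf nee) /=.
  by rewrite -order_eq1 oxp.
Qed.

End Main.

Theorem theorem3p2 (gT : finGroupType) (G : {group gT}) :
  G :!=: 1%g -> nilpotent G ->
  ((~ exists A : {set gT}, word_image_impostor G A) <->
   (abelian G /\ prime (exponent G))).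
Proof.
move=> ntG nilG; split.
  move=> noimp.
  have abG : abelian G.
    by apply/negPn/negP => nabG; apply: noimp; apply: nonab_impostor.
  split => //; apply/negPn/negP => npr; apply: noimp; exact: ab_impostor.
case=> abG prE [A [[sAG A1 autA] hA]].
have abelG : (exponent G).-abelem G by rewrite abelemE // abG dvdnn.
case: (eqVneq A [set 1]) => [eA | neA].
  by have := hA 1%N isT (FOne 1); rewrite eA word_image_one eqxx.
have /subsetPn[x Ax] : ~~ (A \subset [set 1]).
  by apply: contra neA => sA1; rewrite eqEsubset sA1 sub1set.
rewrite inE => nx1.
have eAG : A = G.
  apply/eqP; rewrite eqEsubset sAG; apply/subsetP => y Gy.
  case: (eqVneq y 1) => [-> // | ny1].
  have [a Aa eay] := abelem_trans abelG ntG (subsetP sAG x Ax) Gy nx1 ny1.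
  by rewrite -eay; apply: (subsetP (autA a Aa)); apply: imset_f.
by have := hA 1%N isT (FVar (@ord0 0)); rewrite eAG word_image_var eqxx.
Qed.
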